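(* Let $X$ be a rearrangement invariant space on $(0,\infty)$. If $L_\infty\hookrightarrow X$, then $X$ contains a lattice isometric copy of $\ell_\infty$.
   Context: A rearrangement invariant space on $(0,\infty)$ (Lebesgue measure) is a Banach space $X\subset L_0(0,\infty)$ such that $|f|\le|g|$ a.e., $g\in X$ imply $f\in X$, $\|f\|_X\le\|g\|_X$, containing an a.e. positive function, and such that equimeasurable functions have equal norms (if $f\in X$ and $g$ has the same distribution function, then $g\in X$ and $\|g\|_X=\|f\|_X$). $L_\infty\hookrightarrow X$ means $L_\infty(0,\infty)\subset X$ with continuous inclusion. A lattice isometric copy of $\ell_\infty$ is the image of a linear isometric embedding $T:\ell_\infty\to X$ that is a lattice homomorphism. *)

(* Defs.v *)
From HB Require Import structures.
From mathcomp Require Import all_boot all_order all_algebra.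
From mathcomp Require Import all_classical all_reals all_analysis.
Set Implicit Arguments. Unset Strict Implicit. Unset Printing Implicit Defensive.
Import Order.TTheory GRing.Theory Num.Theory.
Import numFieldNormedType.Exports.
Local Open Scope classical_set_scope.
Local Open Scope ring_scope.

Section RI.
Variable R : realType.

Definition Dom : set R := `]0, +oo[%classic.
Definition leb := (@lebesgue_measure R).

Definition aeD (P : R -> Prop) : Prop := {ae leb, forall x, Dom x -> P x}.

Definition L0 (f : R -> R) : Prop := measurable_fun Dom f.

Definition distrib (f : R -> R) (t : R) : \bar R :=
  leb (Dom `&` [set x | t < `|f x|]).

Definition equimeasurable (f g : R -> R) : Prop :=
  forall t, 0 < t -> distrib f t = distrib g t.

(* A rearrangement invariant (Banach function) space on (0,oo):
   X is a set of measurable functions (elements identified a.e.),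
   nrm its norm. *)
Record ri_space := RISpace {
  X : set (R -> R);
  nrm : (R -> R) -> R;
  X_L0 : forall f, X f -> L0 f;
  X_0 : X (fun _ => 0);
  X_add : forall f g, X f -> X g -> X (f \+ g);
  X_scale : forall (a : R) f, X f -> X (fun x => a * f x);
  nrm_ge0 : forall f, X f -> 0 <= nrm f;
  nrm_eq0 : forall f, X f -> (nrm f = 0 <-> aeD (fun x => f x = 0));
  nrm_scale : forall (a : R) f, X f -> nrm (fun x => a * f x) = `|a| * nrm f;
  nrm_triangle : forall f g, X f -> X g -> nrm (f \+ g) <= nrm f + nrm g;
  X_complete : forall u : nat -> R -> R, (forall n, X (u n)) ->
    (forall e : R, 0 < e -> exists N : nat, forall m n : nat,
        (N <= m)%N -> (N <= n)%N -> nrm (u m \- u n) < e) ->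
    exists f, X f /\ (fun n => nrm (u n \- f)) @ \oo --> (0 : R);
  X_ideal : forall f g, L0 f -> X g -> aeD (fun x => `|f x| <= `|g x|) ->
    X f /\ nrm f <= nrm g;
  X_pos : exists g, X g /\ aeD (fun x => 0 < g x);
  X_ri : forall f g, X f -> L0 g -> equimeasurable f g ->
    X g /\ nrm g = nrm f
}.

Definition Linf_embeds (E : ri_space) : Prop :=
  exists C : R, forall f, L0 f -> forall M : R, 0 <= M ->
    aeD (fun x => `|f x| <= M) -> X E f /\ nrm E f <= C * M.

Definition bounded_seq (a : nat -> R) : Prop := exists M : R, forall n, `|a n| <= M.
Definition linf_norm (a : nat -> R) : R := sup (range (fun n => `|a n|)).

(* a lattice isometric copy of ell_oo in X: the image of a linear isometric
   lattice homomorphism T : ell_oo -> X (equalities in X are a.e. on (0,oo)) *)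
Definition lattice_isometric_copy_linf (E : ri_space) : Prop :=
  exists T : (nat -> R) -> (R -> R),
    (forall a, bounded_seq a -> X E (T a)) /\
    (forall (c : R) a b, bounded_seq a -> bounded_seq b ->
       aeD (fun x => T (fun n => c * a n + b n) x = c * T a x + T b x)) /\
    (forall a, bounded_seq a -> nrm E (T a) = linf_norm a) /\
    (forall a, bounded_seq a ->
       aeD (fun x => T (fun n => `|a n|) x = `|T a x|)).

End RI.

(* Main.v *)
Require Import Defs.
From mathcomp Require Import all_boot all_order all_algebra.
From mathcomp Require Import all_classical all_reals all_analysis.
Set Implicit Arguments. Unset Strict Implicit. Unset Printing Implicit Defensive.
Import Order.TTheory GRing.Theory Num.Theory.
Import numFieldNormedType.Exports.
Local Open Scope classical_set_scope.
Local Open Scope ring_scope.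

Definition gg (k : nat) : nat := head 0%N (CodeSeq.decode k).
Definition kk (n j : nat) : nat := CodeSeq.code [:: n; j].
Lemma gg_kk n j : gg (kk n j) = n.
Proof. by rewrite /gg /kk CodeSeq.codeK. Qed.
Lemma kk_inj n : injective (kk n).
Proof. by move=> i j /(can_inj CodeSeq.codeK) [->]. Qed.

Section H.
Variable R : realType.

Lemma DomE (x : R) : Dom x <-> 0 < x.
Proof. by rewrite /Dom /= in_itv /= andbT. Qed.

Lemma mDom : measurable (@Dom R).
Proof. exact: measurable_itv. Qed.

Lemma meas_step (F : nat -> R) : L0 (fun x : R => F (Num.truncn x)).
Proof.
move=> _ Y mY.
have -> : @Dom R `&` (fun x : R => F (Num.truncn x)) @^-1` Y =
  \bigcup_k (@Dom R `&` [set` `[k%:R, k.+1%:R[] `&` [set _ | Y (F k)]).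
  apply/seteqP; split => x /=.
  - move=> [Dx Yx]; exists (Num.truncn x) => //; split => //; split => //.
    have := DomE x; move=> [h _]; have x0 := h Dx.
    by change (x \in `[(Num.truncn x)%:R, (Num.truncn x).+1%:R[); rewrite in_itv /= truncn_itv // ltW.
  - move=> [k _ [[Dx kx] Yk]]; split => //.
    have kx2 : (k%:R <= x < k.+1%:R) := kx.
    by rewrite (truncn_def kx2).
apply: bigcup_measurable => k _; apply: measurableI.
  by apply: measurableI; [exact: mDom | exact: measurable_itv].
case: (pselect (Y (F k))) => h.
  by have -> : [set _ | Y (F k)] = [set: R] by apply/seteqP; split.
by have -> : [set _ | Y (F k)] = (set0 : set R) by apply/seteqP; split.
Qed.

Lemma leb_Dom : leb (@Dom R) = +oo%E.
Proof. by rewrite /leb /Dom lebesgue_measure_itv /= ltry. Qed.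


Definition A (n : nat) : set R := [set x : R | gg (Num.truncn x) = n].

Lemma ge_all_nat (S : \bar R) : (forall k : nat, (k%:R%:E <= S)%E) -> S = +oo%E.
Proof.
case: S => [s| |] h //.
  have := h (Num.truncn `|s|).+1; rewrite lee_fin => hs.
  have := truncnS_gt `|s|; rewrite ltNge => /negP; elim.
  exact: (le_trans hs (ler_norm s)).
by have := h 0%N; rewrite leeNy_eq.
Qed.

Lemma sum_ones (k : nat) : (\sum_(0 <= i < k | i \in [set: nat]) (1 : \bar R))%E = k%:R%:E.
Proof.
rewrite (eq_bigl xpredT); last by move=> i; rewrite in_setT.
elim: k => [|k IH]; first by rewrite big_nil.
by rewrite big_nat_recr //= IH -EFinD natr1.
Qed.

Lemma leb_An n : leb (@Dom R `&` A n) = +oo%E.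
Proof.
pose F := fun j : nat => [set` `](kk n j)%:R, (kk n j).+1%:R[ ] : set R.
have Fin j x : F j x -> Num.truncn x = kk n j.
  move=> hx; have hx2 : (kk n j)%:R < x < (kk n j).+1%:R := hx.
  apply: truncn_def; case/andP: hx2 => h1 ->; by rewrite ltW.
have sub : \bigcup_j F j `<=` @Dom R `&` A n.
  move=> x [j _ hx]; split; last by rewrite /A /= (Fin j x hx) gg_kk.
  have hx2 : (kk n j)%:R < x < (kk n j).+1%:R := hx.
  apply/DomE; case/andP: hx2 => h1 _; exact: le_lt_trans h1.
have mF j : measurable (F j) := measurable_itv _.
have tF : trivIset setT F.
  move=> i j _ _ [x [hi hj]]. apply: (@kk_inj n).
  by rewrite -(Fin i x hi) -(Fin j x hj).
have mA : measurable (@Dom R `&` A n).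
  have -> : @Dom R `&` A n = @Dom R `&` (fun x : R => if gg (Num.truncn x) == n then 1 else 0 : R) @^-1` [set 1].
    apply/seteqP; split => x [Dx]; rewrite /A /=.
      by move=> ->; rewrite eqxx.
    by case: eqP => // _ /eqP; rewrite eq_sym oner_eq0.
  exact: (meas_step (fun k => if gg k == n then 1 else 0 : R) mDom (measurable_set1 1)).
apply: ge_all_nat => k.
rewrite /leb; have := le_measure (@lebesgue_measure R) (mem_set (bigcup_measurable (fun j _ => mF j))) (mem_set mA) sub.
move=> H; apply: le_trans H.
have HB := measure_bigcup (@lebesgue_measure R) [set: nat] F (fun i _ => mF i) tF.
move/eqP: HB; rewrite eq_le => /andP [_ HB2]; apply: le_trans HB2.
have HL := @nneseries_lim_ge R (fun i => lebesgue_measure (F i)) (fun i => i \in [set: nat]) 0%N k (fun i _ _ => measure_ge0 _ _).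
apply: le_trans HL.
rewrite (eq_bigr (fun _ => 1%E)); first by rewrite sum_ones.
move=> i _; rewrite /F lebesgue_measure_itv /= lte_fin ltr_nat ltnSn -EFinB.
by rewrite -natr1 addrAC subrr add0r.
Qed.

Lemma aeDW (P : R -> Prop) : (forall x, Dom x -> P x) -> aeD P.
Proof. move=> h; rewrite /aeD /leb; exact: aeW. Qed.

Lemma aeD_ex (P : R -> Prop) : aeD P -> exists x, Dom x /\ P x.
Proof.
rewrite /aeD /leb => -[N [mN N0 sN]].
apply: contrapT => hn.
have sub : @Dom R `<=` N.
  move=> x Dx; apply: sN => /= hP; apply: hn; exists x; split => //; exact: hP.
have := le_measure (@lebesgue_measure R) (mem_set mDom) (mem_set mN) sub.
move=> H; have e1 := leb_Dom; rewrite /leb in e1.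
have : (+oo <= (0 : \bar R))%E by rewrite -{1}e1 -N0; exact: H.
by rewrite leye_eq.
Qed.

End H.

Unset Implicit Arguments.

Theorem lemma3p10 (R : realType) (E : ri_space R) :
  Linf_embeds E -> lattice_isometric_copy_linf E.
Proof.
move=> [C HC].
pose one := fun _ : R => 1 : R.
have L0one : L0 one := meas_step (fun _ => 1 : R).
have ae1 : aeD (fun x => `|one x| <= 1).
  by apply: aeDW => x _; rewrite /one normr1.
have [X1 _] := HC one L0one 1 ler01 ae1.
pose c0 := nrm E one.
have c0pos : 0 < c0.
  rewrite lt_neqAle nrm_ge0 // andbT; apply/eqP => h.
  have := (nrm_eq0 X1).1 (esym h); move/aeD_ex => [x [_]].
  by rewrite /one => /eqP; rewrite oner_eq0.
pose T := fun (a : nat -> R) (x : R) => a (gg (Num.truncn x)) / c0.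
have L0T a : L0 (T a) := meas_step (fun k => a (gg k) / c0).
have normT a x : `|T a x| = `|a (gg (Num.truncn x))| / c0.
  by rewrite /T normrM normfV (gtr0_norm c0pos).
exists T; split; [|split; [|split]].
- move=> a [M hM].
  have M0 : 0 <= M := le_trans (normr_ge0 _) (hM 0%N).
  have ae2 : aeD (fun x => `|T a x| <= M / c0).
    apply: aeDW => x _; rewrite normT.
    by apply: ler_wpM2r; [rewrite invr_ge0 ltW | exact: hM].
  by have [] := HC (T a) (L0T a) (M / c0) (divr_ge0 M0 (ltW c0pos)) ae2.
- move=> c a b _ _; apply: aeDW => x _.
  by rewrite /T mulrDl mulrA.
- move=> a [M hM].
  have XTa : X E (T a).
    have M0 : 0 <= M := le_trans (normr_ge0 _) (hM 0%N).
    have ae2 : aeD (fun x => `|T a x| <= M / c0).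
      apply: aeDW => x _; rewrite normT.
      by apply: ler_wpM2r; [rewrite invr_ge0 ltW | exact: hM].
    by have [] := HC (T a) (L0T a) (M / c0) (divr_ge0 M0 (ltW c0pos)) ae2.
  pose L := linf_norm a.
  have hs : has_ubound (range (fun n => `|a n|)).
    by exists M => _ [m _ <-].
  have hub m : `|a m| <= L.
    by apply: (ub_le_sup hs); exists m.
  have Lge0 : 0 <= L := le_trans (normr_ge0 _) (hub 0%N).
  apply/eqP; rewrite eq_le; apply/andP; split.
    have ae3 : aeD (fun x => `|T a x| <= `|(L / c0) * one x|).
      apply: aeDW => x _; rewrite normT /one mulr1 [`|L / c0|]ger0_norm ?divr_ge0 ?(ltW c0pos) //.
      by apply: ler_wpM2r; [rewrite invr_ge0 ltW | exact: hub].
    have [_ hle] := X_ideal (L0T a) (X_scale (L / c0) X1) ae3.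
    apply: (le_trans hle); rewrite nrm_scale // -/c0 ger0_norm ?divr_ge0 ?(ltW c0pos) //.
    by rewrite mulfVK // gt_eqF.
  rewrite /linf_norm; apply: ge_sup; first by exists `|a 0%N|, 0%N.
  move=> _ [m _ <-].
  pose ind := fun x : R => if gg (Num.truncn x) == m then 1 else 0 : R.
  have L0ind : L0 ind := meas_step (fun k => if gg k == m then 1 else 0 : R).
  have ae4 : aeD (fun x => `|ind x| <= `|one x|).
    by apply: aeDW => x _; rewrite /ind /one; case: eqP; rewrite ?normr0 ?normr1.
  have [Xind _] := X_ideal L0ind X1 ae4.
  have eqm : equimeasurable one ind.
    move=> t t0; rewrite /distrib.
    have [t1|t1] := ltP t 1.
      have -> : @Dom R `&` [set x | t < `|one x|] = @Dom R.
        by apply/seteqP; split => [x [] //|x Dx]; split => //=; rewrite /one normr1.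
      have -> : @Dom R `&` [set x | t < `|ind x|] = @Dom R `&` A m.
        apply/seteqP; split => x [Dx]; rewrite /ind /A /=.
          by case: eqP => // _; rewrite normr0 ltNge (ltW t0).
        by move=> ->; rewrite eqxx normr1.
      by rewrite leb_Dom leb_An.
    have -> : @Dom R `&` [set x | t < `|one x|] = set0.
      by apply/seteqP; split => // x [_] /=; rewrite /one normr1 ltNge t1.
    have -> // : @Dom R `&` [set x | t < `|ind x|] = set0.
    apply/seteqP; split => // x [_] /=; rewrite /ind; case: eqP => _.
      by rewrite normr1 ltNge t1.
    by rewrite normr0 ltNge (le_trans ler01 t1).
  have [_ nind] := X_ri X1 L0ind eqm.
  pose h := fun x => (`|a m| / c0) * ind x.
  have L0h : L0 h := meas_step (fun k => (`|a m| / c0) * (if gg k == m then 1 else 0 : R)).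
  have ae5 : aeD (fun x => `|h x| <= `|T a x|).
    apply: aeDW => x _; rewrite normT /h /ind; case: eqP => [->|_].
      by rewrite mulr1 ger0_norm // divr_ge0 // ltW.
    by rewrite mulr0 normr0 divr_ge0 // ltW.
  have [_ hle] := X_ideal L0h XTa ae5.
  have e : Num.norm (`|a m| / c0) = `|a m| / c0 by rewrite ger0_norm // divr_ge0 // ltW.
  apply: le_trans hle; rewrite nrm_scale // nind -/c0 e.
  by rewrite mulfVK // gt_eqF.
- move=> a _; apply: aeDW => x _.
  by rewrite normT /T.
Qed.
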